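(* Let $\mathcal T$ be a set of at least two binary trees over $L$, $\sigma$ a leaf ordering, and let $L_0,\dots,L_k$ and $m_0,\dots,m_k$ be as constructed in the context. For any $T\in\mathcal T$ and any $i\in\{0,\dots,k\}$, let $r_i$ be the root (top vertex) of the subtree $T(L_i)$. Then the subtree $T_{r_i}$ contains no leaf $l_j$ with $j<m_i$.
   Context: Trees. Fix a finite label set $L$ containing a distinguished label $\rho$, and let $n=|L\setminus\{\rho\}|$. A (planted, binary phylogenetic) tree $T$ over $L$ is a rooted tree whose top vertex is labeled $\rho$ and has exactly one child $r(T)$ (the root), in which every other non-leaf vertex has exactly two children, and whose leaves are bijectively labeled by $L\setminus\{\rho\}$; vertices are identified with their labels. For a vertex $v$, $T_v$ is the subtree rooted at $v$. For $S\subseteq L$, $T(S)$ is the smallest subtree of $T$ containing all vertices labeled by $S$, and $T|_S$ is obtained from $T(S)$ by suppressing all unlabeled vertices with fewer than two children. OLA vectors. A leaf ordering is a bijection $\sigma:L\setminus\{\rho\}\to\{0,\dots,n-1\}$; write $l_i=\sigma^{-1}(i)$. For a binary tree $T$ whose non-$\rho$ labels lie in $L\setminus\{\rho\}$ and a vertex $v\ne\rho$, let $\mu(v)=\min\{\sigma(l): l\in L(T_v)\setminus\{\rho\}\}$; each leaf $l$ gets index $\sigma(l)$, and each internal vertex $v$ (not a leaf, not $\rho$) with children $v_1,v_2$ gets index $\sigma(v):=-\max\{\mu(v_1),\mu(v_2)\}$. Let $T^i:=T|_{\{\rho,l_0,\dots,l_i\}}$. For $1\le i\le n-1$ let $v_i$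 be the sibling of $l_i$ in $T^i$, and define $OLA(T,\sigma)_i:=\sigma(v_i)$ (index computed in $T^i$). Mismatched indices. For a finite set $\mathcal T$ of at least two binary trees over $L$ and a leaf ordering $\sigma$, the set $M\subseteq\{1,\dots,n-1\}$ of mismatched indices is built by processing $i=1,\dots,n-1$ in increasing order: $i$ is put in $M$ iff either there are $T,T'\in\mathcal T$ with $OLA(T,\sigma)_i\ne OLA(T',\sigma)_i$, or all $OLA(T,\sigma)_i$ ($T\in\mathcal T$) equal a common value $-j$ with $j$ already in $M$. Construction of leaf sets. Write $M=\{m_1<\dots<m_k\}$ and set $m_0:=0$. Let $I_c=\{1,\dots,n-1\}\setminus M$; for $j\in I_c$ all vectors $OLA(T,\sigma)$ have a common value $c_j$ at index $j$. Initialize $L_0=\{\rho,l_0\}$ and $L_i=\{l_{m_i}\}$ for $1\le i\le k$. For a current set $L_i$ define $$span(L_i):=\Big(\bigcup_{l_j\in L_i\setminus\{l_{m_i},\rho\}}\{-j,j\}\Big)\cup\{m_i\}.$$ Then process the indices $j\in I_c$ in increasing order: add $l_j$ to the unique set $L_i$ for which $c_j\in span(L_i)$ (span taken with the current contents of $L_i$). The resulting sets $L_0,\dots,L_k$ partition $L$. *)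

(* Defs.v *)
From HB Require Import structures.
From mathcomp Require Import all_boot all_order all_algebra.
Set Implicit Arguments. Unset Strict Implicit. Unset Printing Implicit Defensive.
Import GRing.Theory Num.Theory.

(* Non-rho labels form a finite type X (so L = {rho} + X, n = #|X|).
   A planted binary phylogenetic tree is represented by the binary tree
   hanging below rho: the top vertex rho is implicit, the btree's root is r(T). *)
Inductive btree (X : Type) : Type :=
| Leaf of X
| Node of btree X & btree X.
Arguments Leaf {X} _.
Arguments Node {X} _ _.

Fixpoint btree_eqb (X : eqType) (t u : btree X) : bool :=
  match t, u with
  | Leaf x, Leaf y => x == y
  | Node a b, Node c d => btree_eqb a c && btree_eqb b d
  | _, _ => false
  end.

Lemma btree_eqP (X : eqType) : Equality.axiom (@btree_eqb X).
Proof.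
elim=> [x|a IHa b IHb] [y|c d] /=; try by constructor.
- by apply: (iffP eqP) => [->|[]].
- case: (IHa c) => [->|ne]; last by constructor=> -[].
  by case: (IHb d) => [->|ne]; constructor=> // -[].
Qed.

HB.instance Definition _ (X : eqType) := hasDecEq.Build (btree X) (@btree_eqP X).

Fixpoint leaves (X : Type) (t : btree X) : seq X :=
  match t with Leaf x => [:: x] | Node a b => leaves a ++ leaves b end.

Definition tree_over (X : finType) (t : btree X) : Prop :=
  perm_eq (leaves t) (enum X).

(* u is (the subtree T_v rooted at) a vertex v of t *)
Fixpoint is_subtree (X : Type) (u t : btree X) : Prop :=
  u = t \/ match t with Leaf _ => False | Node a b => is_subtree u a \/ is_subtree u b end.

Section Ordering.
Variables (X : finType) (sigma : X -> nat).

Definition leaf_ordering : Prop := injective sigma /\ forall x, sigma x < #|X|.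

Fixpoint mu (t : btree X) : nat :=
  match t with Leaf x => sigma x | Node a b => minn (mu a) (mu b) end.

Definition vindex (t : btree X) : int :=
  match t with
  | Leaf x => Posz (sigma x)
  | Node a b => (- Posz (maxn (mu a) (mu b)))%R
  end.

(* T|_S for S = {rho} \cup P : None if no leaf of P occurs *)
Fixpoint restrict (P : pred X) (t : btree X) : option (btree X) :=
  match t with
  | Leaf x => if P x then Some (Leaf x) else None
  | Node a b =>
      match restrict P a, restrict P b with
      | Some a', Some b' => Some (Node a' b')
      | Some a', None => Some a'
      | None, Some b' => Some b'
      | None, None => None
      end
  end.

Definition is_leaf_l (i : nat) (t : btree X) : bool :=
  match t with Leaf x => sigma x == i | Node _ _ => false end.

(* sibling of the leaf l_i (sigma l_i = i) *)
Fixpoint sibling (i : nat) (t : btree X) : option (btree X) :=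
  match t with
  | Leaf _ => None
  | Node a b =>
      if is_leaf_l i a then Some b
      else if is_leaf_l i b then Some a
      else match sibling i a with Some v => Some v | None => sibling i b end
  end.

Definition OLA (T : btree X) (i : nat) : int :=
  match restrict (fun x => sigma x <= i) T with
  | Some Ti => match sibling i Ti with Some v => vindex v | None => 0%R end
  | None => 0%R
  end.

Variable Ts : seq (btree X).

(* common value at index i (meaningful for i not mismatched) *)
Definition cval (i : nat) : int :=
  if Ts is T0 :: _ then OLA T0 i else 0%R.

(* is i mismatched, given the mismatched indices < i found so far *)
Definition mis_step (i : nat) (prev : seq nat) : bool :=
  has (fun T => has (fun T' => OLA T i != OLA T' i) Ts) Ts
  || has (fun j => cval i == (- (Posz j))%R) prev.

Fixpoint Mupto (k : nat) : seq nat :=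
  match k with
  | 0 => [::]
  | k'.+1 => let p := Mupto k' in
             if (k'.+1 < #|X|) && mis_step k'.+1 p then rcons p k'.+1 else p
  end.

(* M = {m_1 < ... < m_k} as an increasing sequence *)
Definition M : seq nat := Mupto #|X|.-1.
Definition kM : nat := size M.
(* m_0 = 0, m_i = i-th element of M *)
Definition mm (i : nat) : nat := if i is i'.+1 then nth 0 M i' else 0.

(* c \in span(L_i), where prev gives the block numbers of l_0..l_(j-1) *)
Definition in_span (i j : nat) (prev : seq nat) (c : int) : bool :=
  (c == Posz (mm i)) ||
  has (fun j' => [&& nth 0 prev j' == i, j' != 0, j' \notin M &
                     (c == (Posz j')) || (c == (- (Posz j'))%R)]) (iota 0 j).

(* block number of l_j, given the blocks of l_0..l_(j-1) *)
Definition new_block (j : nat) (prev : seq nat) : nat :=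
  if j == 0 then 0
  else if j \in M then (index j M).+1
  else find (fun i => in_span i j prev (cval j)) (iota 0 kM.+1).

Fixpoint blocks (j : nat) : seq nat :=
  match j with
  | 0 => [::]
  | j'.+1 => let p := blocks j' in rcons p (new_block j' p)
  end.

(* L_i as a predicate on labels option X (None = rho) *)
Definition Lset (i : nat) (l : option X) : bool :=
  match l with
  | None => i == 0
  | Some x => nth 0 (blocks #|X|) (sigma x) == i
  end.

End Ordering.

(* u is T_{r}, where r is the root (top vertex) of T(S), S a set of labels
   (None = rho).  If rho \in S then r = rho and T_rho is the whole tree. *)
Definition top_subtree (X : finType) (T : btree X) (S : pred (option X)) (u : btree X) : Prop :=
  if S None then u = T
  else [/\ is_subtree u T,
           (forall x, S (Some x) -> x \in leaves u) &
           (match u with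
            | Leaf _ => True
            | Node a b => ~ (forall x, S (Some x) -> x \in leaves a) /\
                          ~ (forall x, S (Some x) -> x \in leaves b)
            end)].

(* Main.v *)
Require Import Defs.
From mathcomp Require Import all_boot all_order all_algebra zify.
Set Implicit Arguments. Unset Strict Implicit. Unset Printing Implicit Defensive.

Section Trees.
Variable X : finType.
Implicit Types (t u w A v : btree X).

Lemma bt_refl t : is_subtree t t.
Proof. by case: t => *; left. Qed.

Lemma bt_trans u w t : is_subtree u w -> is_subtree w t -> is_subtree u t.
Proof.
move=> Huw; elim: t => [x|a IHa b IHb] [<-|H] //.
case: H => H.
- by right; left; apply: IHa.
- by right; right; apply: IHb.
Qed.

Lemma bt_leaves u t : is_subtree u t -> {subset leaves u <= leaves t}.
Proof.
elim: t => [x|a IHa b IHb] /=; first by case=> // ->.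
case=> [->|[H|H]] // y Hy; rewrite mem_cat.
- by rewrite IHa.
- by rewrite IHb ?orbT.
Qed.

Lemma bt_uniq u t : is_subtree u t -> uniq (leaves t) -> uniq (leaves u).
Proof.
elim: t => [x|a IHa b IHb] /=; first by case=> // ->.
case=> [->|[H|H]] //; rewrite cat_uniq => /and3P[? ? ?].
- exact: IHa.
- exact: IHb.
Qed.

Lemma bt_leaf x t : x \in leaves t -> is_subtree (Leaf x) t.
Proof.
elim: t => [y|a IHa b IHb] /=; first by rewrite inE => /eqP ->; left.
rewrite mem_cat => /orP[H|H]; right.
- by left; apply: IHa.
- by right; apply: IHb.
Qed.

Lemma bt_nest u w t y : uniq (leaves t) -> is_subtree u t -> is_subtree w t ->
  y \in leaves u -> y \in leaves w -> is_subtree u w \/ is_subtree w u.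
Proof.
elim: t => [x|a IHa b IHb].
- by move=> _ [->|[]] [->|[]] _ _; left; apply: bt_refl.
- rewrite /= cat_uniq => /and3P[ua dis ub].
  case=> [Eu|[Hu|Hu]] Hw.
  + by move=> _ _; right; rewrite Eu.
  + move: Hw => /= [Ew|[Hw|Hw]].
    * by move=> _ _; left; rewrite Ew /=; right; left.
    * exact: IHa.
    * move=> /(bt_leaves Hu) y1 /(bt_leaves Hw) y2.
      by move/hasPn: dis => /(_ y y2); rewrite y1.
  + move: Hw => /= [Ew|[Hw|Hw]].
    * by move=> _ _; left; rewrite Ew /=; right; right.
    * move=> /(bt_leaves Hu) y1 /(bt_leaves Hw) y2.
      by move/hasPn: dis => /(_ y y1); rewrite y2.
    * exact: IHb.
Qed.

Lemma restrict_leaves (P : pred X) t :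
  match restrict P t with
  | Some t' => leaves t' = filter P (leaves t)
  | None => filter P (leaves t) = [::] end.
Proof.
elim: t => [x|a IHa b IHb] /=; first by case: (P x).
rewrite filter_cat.
by case: (restrict P a) IHa => [a'|] Ha; case: (restrict P b) IHb => [b'|] Hb /=;
  rewrite ?Ha ?Hb ?cats0.
Qed.

Lemma restrict_Some P t t' : restrict P t = Some t' -> leaves t' = filter P (leaves t).
Proof. by move=> H; have := restrict_leaves P t; rewrite H. Qed.

Lemma restrict_None P t : restrict P t = None -> filter P (leaves t) = [::].
Proof. by move=> H; have := restrict_leaves P t; rewrite H. Qed.

Lemma restrict_Node (P : pred X) A (x1 x2 : btree X) : restrict P A = Some (Node x1 x2) ->
  exists D1 D2, [/\ is_subtree (Node D1 D2) A, restrict P D1 = Some x1,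
     restrict P D2 = Some x2 &
     forall q, q \in leaves A -> P q -> q \in leaves (Node D1 D2)].
Proof.
elim: A => [x|a IHa b IHb] /=; first by case: (P x).
case Ea: (restrict P a) => [a'|]; case Eb: (restrict P b) => [b'|] //.
- case=> <- <-; exists a, b; split => //; first by left.
- rewrite -Ea => /IHa [D1 [D2 [H1 H2 H3 H4]]]; exists D1, D2; split => //; first by right; left.
  move=> q; rewrite mem_cat => /orP[/H4//|qb Pq].
  have := restrict_None Eb => /eqP; rewrite -[_ == _]negbK -has_filter => /hasPn/(_ q qb).
  by rewrite Pq.
- rewrite -Eb => /IHb [D1 [D2 [H1 H2 H3 H4]]]; exists D1, D2; split => //; first by right; right.
  move=> q; rewrite mem_cat => /orP[qa Pq|/H4//].
  have := restrict_None Ea => /eqP; rewrite -[_ == _]negbK -has_filter => /hasPn/(_ q qa).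
  by rewrite Pq.
Qed.

Variable sigma : X -> nat.

Lemma mu_le t y : y \in leaves t -> mu sigma t <= sigma y.
Proof.
elim: t => [x|a IHa b IHb] /=; first by rewrite inE => /eqP ->.
rewrite mem_cat geq_min => /orP[/IHa->//|/IHb->]; by rewrite orbT.
Qed.

Lemma mu_attain t : exists2 y, y \in leaves t & sigma y = mu sigma t.
Proof.
elim: t => [x|a [ya ha ea] b [yb hb eb]] /=; first by exists x; rewrite ?inE.
case: (leqP (mu sigma a) (mu sigma b)) => H.
- by exists ya; rewrite ?mem_cat ?ha // ea; apply/esym/minn_idPl.
- by exists yb; rewrite ?mem_cat ?hb ?orbT // eb; apply/esym/minn_idPr/ltnW.
Qed.

Lemma sibling_leaves k t v : sibling sigma k t = Some v -> {subset leaves v <= leaves t}.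
Proof.
elim: t => [x|a IHa b IHb] //=.
case: ifP => _; first by case=> <- y yb; rewrite mem_cat yb orbT.
case: ifP => _; first by case=> <- y yb; rewrite mem_cat yb.
case Ea: (sibling sigma k a) => [va|].
- by case=> ?; subst v => y /(IHa Ea) ya; rewrite mem_cat ya.
- by move=> /IHb H y /H yb; rewrite mem_cat yb orbT.
Qed.

Lemma sibling_char (P : pred X) k t t' v :
  restrict P t = Some t' -> sibling sigma k t' = Some v ->
  exists A Bt, [/\ is_subtree (Node A Bt) t \/ is_subtree (Node Bt A) t,
     restrict P A = Some v,
     forall y, y \in leaves Bt -> P y -> sigma y = k &
     exists2 z, z \in leaves Bt & P z && (sigma z == k)].
Proof.
elim: t t' => [x|a IHa b IHb] t' /=.
  by case: (P x) => // -[<-].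
case Ea: (restrict P a) => [a'|]; case Eb: (restrict P b) => [b'|] //.
- case=> <- /=.
  case: ifP => Ha.
    case=> Ev; exists b, a; split => //.
    + by right; left.
    + by rewrite Eb Ev.
    + move: Ha; case: a' Ea => // x Ea /eqP Hx y ya Py.
      have Hl := restrict_Some Ea; rewrite /= in Hl.
      have : y \in [:: x] by rewrite Hl mem_filter Py ya.
      by rewrite inE => /eqP ->.
    + move: Ha; case: a' Ea => // x Ea Hx; exists x.
        have Hl := restrict_Some Ea; rewrite /= in Hl.
        have : x \in filter P (leaves a) by rewrite -Hl inE.
        by rewrite mem_filter => /andP[].
      have Hl := restrict_Some Ea; rewrite /= in Hl.
      have : x \in filter P (leaves a) by rewrite -Hl inE.
      by move: Hx => /= ->; rewrite andbT mem_filter => /andP[].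
  case: ifP => Hb.
    case=> Ev; exists a, b; split => //.
    + by left; left.
    + by rewrite Ea Ev.
    + move: Hb; case: b' Eb => // x Eb /eqP Hx y yb Py.
      have Hl := restrict_Some Eb; rewrite /= in Hl.
      have : y \in [:: x] by rewrite Hl mem_filter Py yb.
      by rewrite inE => /eqP ->.
    + move: Hb; case: b' Eb => // x Eb Hx; exists x.
        have Hl := restrict_Some Eb; rewrite /= in Hl.
        have : x \in filter P (leaves b) by rewrite -Hl inE.
        by rewrite mem_filter => /andP[].
      have Hl := restrict_Some Eb; rewrite /= in Hl.
      have : x \in filter P (leaves b) by rewrite -Hl inE.
      by move: Hx => /= ->; rewrite andbT mem_filter => /andP[].
  case Es: (sibling sigma k a') => [va|].
    case=> ?; subst v; have [A [Bt [H1 H2 H3 H4]]] := IHa _ Ea Es.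
    exists A, Bt; split => //.
    by case: H1 => H1; [left|right]; right; left.
  move=> Es'; have [A [Bt [H1 H2 H3 H4]]] := IHb _ Eb Es'.
  exists A, Bt; split => //.
  by case: H1 => H1; [left|right]; right; right.
- case=> ?; subst t' => Es; have [A [Bt [H1 H2 H3 H4]]] := IHa _ Ea Es.
  exists A, Bt; split => //.
  by case: H1 => H1; [left|right]; right; left.
- case=> ?; subst t' => Es; have [A [Bt [H1 H2 H3 H4]]] := IHb _ Eb Es.
  exists A, Bt; split => //.
  by case: H1 => H1; [left|right]; right; right.
Qed.

End Trees.

Section Comb.
Variables (X : finType) (sigma : X -> nat) (Ts : seq (btree X)).
Local Notation n := #|X|.
Local Notation Mupto := (Mupto sigma Ts).
Local Notation blocks := (blocks sigma Ts).

Lemma Mupto_mem k j : j \in Mupto k -> [&& 0 < j, j <= k & j < n].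
Proof.
elim: k => [|k IH] //=.
case: ifP => [/andP[kn _]|_]; last by move/IH => /and3P[-> /leqW -> ->].
rewrite mem_rcons inE => /orP[/eqP ->|/IH /and3P[-> /leqW -> ->]] //.
by rewrite leqnn kn.
Qed.

Lemma Mupto_uniq k : uniq (Mupto k).
Proof.
elim: k => [|k IH] //=.
case: ifP => // _; rewrite rcons_uniq IH andbT.
by apply/negP => /Mupto_mem /and3P[_ ]; rewrite ltnn.
Qed.

Lemma Mupto_stable k j : j <= k -> (j \in Mupto k) = (j \in Mupto j).
Proof.
elim: k => [|k IH]; first by rewrite leqn0 => /eqP ->.
rewrite leq_eqVlt => /orP[/eqP ->//|]; rewrite ltnS => jk.
rewrite -(IH jk) /=; case: ifP => // _.
rewrite mem_rcons inE; case: eqP => // E; by move: jk; rewrite E ltnn.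
Qed.

Lemma Mupto_self j : 0 < j -> (j \in Mupto j) = (j < n) && mis_step sigma Ts j (Mupto j.-1).
Proof.
case: j => // j _ /=.
case: ifP => H.
  by rewrite mem_rcons inE eqxx.
apply/negP => /Mupto_mem /and3P[_]; by rewrite ltnn.
Qed.

Lemma inM j : 0 < j < n -> (j \in M sigma Ts) = mis_step sigma Ts j (Mupto j.-1).
Proof.
case/andP=> j0 jn; rewrite /M Mupto_stable; last by rewrite -ltnS prednK // (leq_ltn_trans _ jn).
by rewrite Mupto_self // jn.
Qed.

Lemma M_mem j : j \in M sigma Ts -> 0 < j < n.
Proof. by move=> /Mupto_mem /and3P[-> _ ->]. Qed.

Lemma M_uniq : uniq (M sigma Ts).
Proof. exact: Mupto_uniq. Qed.

Lemma blocks_size k : size (blocks k) = k.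
Proof. by elim: k => //= k IH; rewrite size_rcons IH. Qed.

Lemma blocks_prefix k k' : k <= k' -> exists s, blocks k' = blocks k ++ s.
Proof.
elim: k' => [|k' IH]; first by rewrite leqn0 => /eqP ->; exists [::]; rewrite cats0.
rewrite leq_eqVlt => /orP[/eqP ->|]; first by exists [::]; rewrite cats0.
rewrite ltnS => /IH [s Hs]; exists (rcons s (new_block sigma Ts k' (blocks k'))).
by rewrite /= Hs rcons_cat.
Qed.

Lemma blocks_nth k k' j : j < k -> k <= k' -> nth 0 (blocks k') j = nth 0 (blocks k) j.
Proof.
move=> jk kk'; have [s ->] := blocks_prefix kk'.
by rewrite nth_cat blocks_size jk.
Qed.

Lemma blocks_new k j : j < k -> nth 0 (blocks k) j = new_block sigma Ts j (blocks j).
Proof.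
move=> jk; rewrite (@blocks_nth j.+1) //=.
by rewrite nth_rcons blocks_size ltnn eqxx.
Qed.

End Comb.
Import GRing.Theory Num.Theory.

Section Main.
Variables (X : finType) (sigma : X -> nat) (Ts : seq (btree X)).
Hypothesis inj : injective sigma.
Hypothesis bnd : forall x, sigma x < #|X|.
Variable i : nat.
Hypothesis i0 : 0 < i.
Hypothesis ik : i <= kM sigma Ts.
Local Notation n := #|X|.
Local Notation MM := (M sigma Ts).
Local Notation m := (mm sigma Ts i).
Local Notation B j := (nth 0 (blocks sigma Ts n) j).

Lemma m_in : m \in MM.
Proof. by rewrite /mm; case: i i0 ik => // i' _ H; apply: mem_nth. Qed.

Lemma m_pos : 0 < m < n.
Proof. exact: M_mem m_in. Qed.

Lemma m_index : index m MM = i.-1.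
Proof. rewrite /mm; case: i i0 ik => // i' _ H; apply: index_uniq => //; exact: M_uniq. Qed.

Lemma nb_i j prev : new_block sigma Ts j prev = i ->
  [/\ j != 0, j \in MM -> j = m & j \notin MM -> in_span sigma Ts i j prev (cval sigma Ts j)].
Proof.
rewrite /new_block; case: eqP => [_ E|j0]; first by move: i0; rewrite -E.
case: ifP => jM.
  move=> E; split => // _; rewrite /mm -E /= nth_index //.
move=> E; split => // _.
have : find (fun i => in_span sigma Ts i j prev (cval sigma Ts j)) (iota 0 (kM sigma Ts).+1)
   < size (iota 0 (kM sigma Ts).+1) by rewrite size_iota E ltnS.
rewrite -has_find => /(nth_find 0); rewrite E nth_iota //.
Qed.

Lemma B_m : B m = i.
Proof.
have /andP[m0 mn] := m_pos.
rewrite blocks_new // /new_block.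
rewrite (negbTE (lt0n_neq0 m0)) m_in m_index prednK //.
Qed.

Lemma OLA_pos T j k : OLA sigma T j = Posz k -> 0 < k -> k <= j.
Proof.
rewrite /OLA.
case E: (restrict (fun x => sigma x <= j) T) => [Ti|]; last by case=> <-.
case E2: (sibling sigma j Ti) => [v|]; last by case=> <-.
case: v E2 => [y|a b] E2 /=.
- case=> <- _.
  have : y \in leaves Ti by apply: (sibling_leaves E2); rewrite inE.
  by rewrite (restrict_Some E) mem_filter => /andP[].
- move=> H; have : (- Posz (maxn (mu sigma a) (mu sigma b)) <= 0)%R.
    by rewrite oppr_le0.
  by rewrite H lez_nat leqn0 => /eqP ->.
Qed.

Lemma cval_pos j k : cval sigma Ts j = Posz k -> 0 < k -> k <= j.
Proof. by rewrite /cval; case: Ts => [[<-]//|T0 _]; apply: OLA_pos. Qed.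

Lemma B_low j : B j = i -> m <= j.
Proof.
elim/ltn_ind: j => j IH Bj.
have jn : j < n.
  by case: (ltnP j n) => // H; move: Bj; rewrite nth_default ?blocks_size // => E; move: i0; rewrite -E.
move: Bj; rewrite blocks_new // => /nb_i [j0 HM Hs].
case: (boolP (j \in MM)) => jM; first by rewrite HM.
move: (Hs jM); rewrite /in_span => /orP[/eqP/cval_pos -> //|]; first by case/andP: m_pos.
case/hasP => j' + /and4P[Bj' _ _ _].
rewrite mem_iota add0n => jj'.
by apply: leq_trans (ltnW jj'); apply: IH => //; rewrite -(eqP Bj'); exact: (blocks_nth sigma Ts jj' (ltnW jn)).
Qed.

Lemma nomis T j : T \in Ts -> 0 < j < n -> j \notin MM -> OLA sigma T j = cval sigma Ts j.
Proof.
move=> TT jn; rewrite inM // /mis_step negb_or => /andP[H _].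
rewrite /cval; case: Ts TT H => // T0 s TT H.
apply/eqP; apply: contraNT H => ne; apply/hasP; exists T => //.
by apply/hasP; exists T0; rewrite ?inE ?eqxx.
Qed.

Lemma xm_ex : exists xm, sigma xm = m.
Proof.
have /andP[_ mn] := m_pos.
pose f (x : X) : 'I_n := Ordinal (bnd x).
have finj : injective f by move=> x y [] /inj.
have := inj_card_onto finj (eq_leq (card_ord _)) (Ordinal mn).
by case/codomP => x [] E; exists x.
Qed.


Lemma int_negP (a b : nat) : Posz a = (- Posz b)%R -> a = 0%N /\ b = 0%N.
Proof. lia. Qed.
Lemma int_negN (a b : nat) : (- Posz a)%R = (- Posz b)%R -> a = b.
Proof. lia. Qed.

Lemma span0 j prev : ~~ in_span sigma Ts i j prev 0.
Proof.
rewrite /in_span negb_or; apply/andP; split.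
  by apply/negP => /eqP E; have /andP[m0 _] := m_pos; lia.
apply/hasPn => j' _; apply/negP => /and4P[_ j0 _ /orP[/eqP E|/eqP E]]; lia.
Qed.

Lemma span_char J v : J < n -> m <= J ->
  in_span sigma Ts i J.+1 (blocks sigma Ts J.+1) (vindex sigma v) ->
  exists2 y, y \in leaves v & [/\ B (sigma y) = i, sigma y <= J &
     forall x1 x2, v = Node x1 x2 -> sigma y = maxn (mu sigma x1) (mu sigma x2) /\ m < sigma y].
Proof.
move=> Jn mJ; rewrite /in_span => /orP[/eqP E|].
  case: v E => [y|a b] /=.
    case=> Ey; exists y; rewrite ?inE //; split => //; first by rewrite Ey B_m.
    by rewrite Ey.
  by move=> /esym/int_negP [E _]; have := m_pos; rewrite E.
case/hasP => j' + /and4P[Bj' j0 jM E].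
rewrite mem_iota add0n ltnS => jJ.
have Bj : B j' = i.
  by rewrite -(eqP Bj'); apply: (blocks_nth sigma Ts); rewrite ?ltnS.
case: v E => [y|a b] /= /orP[/eqP E|/eqP E].
- case: E => Ey; exists y; rewrite ?inE // Ey; split => //.
- by have [_ E'] := int_negP E; move: j0; rewrite E'.
- by have [E' _] := int_negP (esym E); move: j0; rewrite E'.
- have Em := int_negN E.
  have mj : m < j'.
    rewrite ltn_neqAle B_low // andbT; apply/eqP => mj; move: jM; rewrite -mj m_in.
    done.
  have [y yl ye] : exists2 y, y \in leaves (Node a b) & sigma y = j'.
    case: (leqP (mu sigma a) (mu sigma b)) Em => H.
      move=> Em; have [y yl ye] := mu_attain sigma b.
      by exists y; rewrite ?mem_cat ?yl ?orbT // ye.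
    move=> Em; have [y yl ye] := mu_attain sigma a.
    by exists y; rewrite ?mem_cat ?yl // ye.
  exists y => //; rewrite ye; split => // x1 x2 [<- <-]; by rewrite Em.
Qed.

Lemma two_children (P : pred X) D1 D2 x1 x2 xm y :
  uniq (leaves D1 ++ leaves D2) -> restrict P D1 = Some x1 -> restrict P D2 = Some x2 ->
  xm \in leaves D1 -> y \in leaves D1 -> P xm -> P y ->
  sigma xm < sigma y -> sigma y = maxn (mu sigma x1) (mu sigma x2) -> False.
Proof.
move=> U E1 E2 xD yD Pxm Py lt Ey.
have xx1 : xm \in leaves x1 by rewrite (restrict_Some E1) mem_filter Pxm.
have yx1 : y \in leaves x1 by rewrite (restrict_Some E1) mem_filter Py.
have h1 := mu_le sigma xx1.
have E : mu sigma x2 = sigma y.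
  move: Ey; case: (leqP (mu sigma x1) (mu sigma x2)) => H.
    by [].
  by move=> E; move: lt; rewrite E ltnNge h1.
have [y' y'l y'e] := mu_attain sigma x2.
move: y'e; rewrite E => /inj Ey'; subst y'.
have yD2 : y \in leaves D2 by move: y'l; rewrite (restrict_Some E2) mem_filter => /andP[].
by move: U; rewrite cat_uniq => /and3P[_ /hasPn /(_ y yD2)]; rewrite yD.
Qed.

Lemma Q T : T \in Ts -> tree_over T -> forall d, exists w,
  [/\ is_subtree w T, (forall y, y \in leaves w -> m <= sigma y) &
      forall x, B (sigma x) = i -> sigma x <= m + d -> x \in leaves w].
Proof.
move=> TT Tov.
have uT : uniq (leaves T) by rewrite (perm_uniq Tov) enum_uniq.
have [xm xme] := xm_ex.
have xmT : xm \in leaves T by rewrite (perm_mem Tov) mem_enum.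
have Bxm : B (sigma xm) = i by rewrite xme B_m.
elim=> [|d [w [wT wg wS]]].
  exists (Leaf xm); split; first exact: bt_leaf.
    by move=> y; rewrite inE => /eqP ->; rewrite xme.
  move=> x Bx; rewrite addn0 => xl.
  have /inj -> : sigma x = sigma xm by rewrite xme; apply/eqP; rewrite eqn_leq xl B_low.
  by rewrite inE.
set J := m + d.
case: (boolP [exists z, (B (sigma z) == i) && (sigma z == J.+1) && (z \notin leaves w)]);
  last first.
  move=> /existsPn Hn; exists w; split => // x Bx; rewrite addnS leq_eqVlt ltnS.
  case/orP=> [/eqP Ex|]; last exact: wS.
  by move: (Hn x); rewrite Bx eqxx Ex eqxx /= negbK.
case/existsP => z /andP[/andP[/eqP Bz /eqP zJ] zw].
have Jn : J.+1 < n by rewrite -zJ.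
have BJ : new_block sigma Ts J.+1 (blocks sigma Ts J.+1) = i by rewrite -(blocks_new sigma Ts Jn) -zJ.
have [_ HM Hs] := nb_i BJ.
have JM : J.+1 \notin MM.
  by apply/negP => /HM E; move: (leq_addr d m); rewrite -/J -E ltnn.
have := Hs JM; rewrite -(nomis TT) ?Jn ?andbT // /OLA.
set P := (fun x => sigma x <= J.+1).
case ER: (restrict P T) => [Ti|]; last by rewrite (negbTE (span0 _ _)).
case ES: (sibling sigma J.+1 Ti) => [v|]; last by rewrite (negbTE (span0 _ _)).
move=> /(span_char (ltnW Jn) (leq_addr d m)) [y yv [By yJ Hnode]].
have [A [Bt [HN EA HB [z' z'B /andP[Pz' /eqP z'e]]]]] := sibling_char ER ES.
have ez : z' = z by apply: inj; rewrite z'e zJ.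
subst z'.
have [N [NT AN HNl zN]] : exists N, [/\ is_subtree N T, is_subtree A N,
    forall q, q \in leaves N -> q \in leaves A \/ q \in leaves Bt & z \in leaves N].
  case: HN => HN.
    exists (Node A Bt); split => //.
    - by right; left; apply: bt_refl.
    - by move=> q; rewrite /= mem_cat => /orP[]; [left|right].
    - by rewrite /= mem_cat z'B orbT.
  exists (Node Bt A); split => //.
  - by right; right; apply: bt_refl.
  - by move=> q; rewrite /= mem_cat => /orP[]; [right|left].
  - by rewrite /= mem_cat z'B.
have yA : y \in leaves A by move: yv; rewrite (restrict_Some EA) mem_filter => /andP[].
have Py : P y by move: yv; rewrite (restrict_Some EA) mem_filter => /andP[].
have yw : y \in leaves w by apply: wS; rewrite ?addnS.
have AT := bt_trans AN NT.
have wN : is_subtree w N.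
  have [//|Nw] := bt_nest uT wT NT yw (bt_leaves AN yA).
  by move: zw; rewrite (bt_leaves Nw zN).
exists N; split => //; last first.
  move=> x Bx; rewrite addnS leq_eqVlt ltnS => /orP[/eqP Ex|xl].
    by have /inj -> : sigma x = sigma z by rewrite Ex zJ.
  exact: (bt_leaves wN (wS _ Bx xl)).
move=> q /HNl [qA|qB]; last first.
  case: (boolP (P q)) => Pq; first by rewrite (HB _ qB Pq) -zJ B_low.
  by move: Pq; rewrite /P -ltnNge => H; apply: leq_trans (ltnW H); rewrite leqW // leq_addr.
have [Aw|wA] := bt_nest uT AT wT (bt_leaves (bt_refl A) yA) yw.
  exact: wg (bt_leaves Aw qA).
rewrite leqNgt; apply/negP => qm.
have Pq : P q by rewrite /P ltnW // (leq_trans qm) // leqW // leq_addr.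
have xmw : xm \in leaves w by apply: wS => //; rewrite xme leq_addr.
have Pxm : P xm by rewrite /P xme ltnW // ltnS leq_addr.
have xmA := bt_leaves wA xmw.
case: v EA yv Hnode ES => [y0|x1 x2] EA yv Hnode ES.
  have L := restrict_Some EA; rewrite /= in L.
  have : xm \in [:: y0] by rewrite L mem_filter Pxm xmA.
  have : q \in [:: y0] by rewrite L mem_filter Pq qA.
  rewrite !inE => /eqP Eq /eqP E; move: qm; by rewrite Eq -E xme ltnn.
have [Hy my] := Hnode _ _ erefl.
have [D1 [D2 [DA E1 E2 HD]]] := restrict_Node EA.
have DT := bt_trans DA AT.
have UD : uniq (leaves D1 ++ leaves D2) by exact: (bt_uniq DT uT).
have xmD := HD _ xmA Pxm.
have [Dw|wD] := bt_nest uT DT wT xmD xmw.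
  by move: qm; rewrite ltnNge (wg _ (bt_leaves Dw (HD _ qA Pq))).
move: wD => /= [Ew|[w1|w2]].
- by move: qm; rewrite ltnNge (wg q) // Ew HD.
- apply: (two_children (P:=P) UD E1 E2 (bt_leaves w1 xmw) (bt_leaves w1 yw) Pxm Py) => //.
  by rewrite xme.
- apply: (two_children (P:=P) (x1:=x2) (x2:=x1) _ E2 E1 (bt_leaves w2 xmw) (bt_leaves w2 yw) Pxm Py).
  + by rewrite uniq_catC.
  + by rewrite xme.
  + by rewrite maxnC.
Qed.

End Main.

Theorem lemma4 (X : finType) (sigma : X -> nat) (Ts : seq (btree X)) :
  leaf_ordering sigma ->
  uniq Ts -> 2 <= size Ts -> (forall T, T \in Ts -> tree_over T) ->
  forall T, T \in Ts ->
  forall i, i <= kM sigma Ts ->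
  forall u, top_subtree T (Lset sigma Ts i) u ->
  forall x, x \in leaves u -> mm sigma Ts i <= sigma x.
Proof.
move=> [inj bnd] _ _ Tov T TT i ik u.
case: (posnP i) => [-> | i0]; first by [].
rewrite /top_subtree /= (negbTE (lt0n_neq0 i0)) => -[uT Hall Hmin].
have Tv := Tov T TT.
have uTl : uniq (leaves T) by rewrite (perm_uniq Tv) enum_uniq.
have [mp mn] := andP (m_pos i0 ik).
have [w [wT wg wS]] := Q inj bnd i0 ik TT Tv (#|X|.-1 - mm sigma Ts i).
have wS' : forall x, nth 0 (blocks sigma Ts #|X|) (sigma x) = i -> x \in leaves w.
  move=> x Bx; apply: wS => //; rewrite subnKC; first by rewrite -ltnS prednK // (leq_ltn_trans _ mn).
  by rewrite -ltnS prednK // (leq_ltn_trans _ mn).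
have [xm xme] := xm_ex inj bnd i0 ik.
have Bxm : nth 0 (blocks sigma Ts #|X|) (sigma xm) = i by rewrite xme B_m.
have xmu : xm \in leaves u by apply: Hall => /=; rewrite Bxm.
have [uw|wu] := bt_nest uTl uT wT xmu (wS' _ Bxm).
  by move=> x /(bt_leaves uw) /wg.
move: wu Hmin; case: u {uT Hall xmu} => [y|a b] /=.
  by move=> [Ew|[]] _ x; rewrite -[[:: y]]/(leaves (Leaf y)) -Ew => /wg.
case=> [Ew|[wa|wb]] [Ha Hb].
  by move=> x; rewrite -[_ ++ _]/(leaves (Node a b)) -Ew => /wg.
  all: exfalso.
- apply: Ha => x /= /eqP /wS' /(bt_leaves wa) //.
- apply: Hb => x /= /eqP /wS' /(bt_leaves wb) //.
Qed.
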